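(* Let $\mu_0=\sum_{i=1}^{N_0}p_0^i\nu_0^i$ and $\mu_1=\sum_{j=1}^{N_1}p_1^j\nu_1^j$ be Gaussian mixture distributions on $\mathbb{R}^n$, let $\pi^*$ be a minimizer of $\sum_{i,j}W_2(\nu_0^i,\nu_1^j)^2\pi(i,j)$ over $\pi\in\Pi(p_0,p_1)$, and for $t\in[0,1]$ define $\mu_t=\sum_{i,j}\pi^*(i,j)\,\nu_t^{ij}$, where $\nu_t^{ij}$ is the displacement interpolation between $\nu_0^i$ and $\nu_1^j$ defined below. Then $d(\mu_s,\mu_t)=(t-s)\,d(\mu_0,\mu_1)$ for all $0\le s<t\le 1$.
   Context: A Gaussian distribution on $\mathbb{R}^n$ is the normal law $N(m,\Sigma)$ with mean $m\in\mathbb{R}^n$ and symmetric positive definite covariance $\Sigma$. For two Gaussians $\nu_0=N(m_0,\Sigma_0)$, $\nu_1=N(m_1,\Sigma_1)$, $W_2(\nu_0,\nu_1)$ denotes their 2-Wasserstein distance, which equals $W_2(\nu_0,\nu_1)^2=\|m_0-m_1\|^2+\operatorname{trace}\big(\Sigma_0+\Sigma_1-2(\Sigma_0^{1/2}\Sigma_1\Sigma_0^{1/2})^{1/2}\big)$; their displacement interpolation at time $t\in[0,1]$ is the Gaussian $\nu_t=N(m_t,\Sigma_t)$ with $m_t=(1-t)m_0+tm_1$ and $\Sigma_t=\Sigma_0^{-1/2}\big((1-t)\Sigma_0+t(\Sigma_0^{1/2}\Sigma_1\Sigma_0^{1/2})^{1/2}\big)^2\Sigma_0^{-1/2}$. A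 Gaussian mixture distribution is a probability distribution $\mu=\sum_{k=1}^N p^k\nu^k$ with $N$ finite, each $\nu^k$ Gaussian, and $p=(p^1,\dots,p^N)$ a probability vector. For mixtures $\mu_0=\sum_i p_0^i\nu_0^i$, $\mu_1=\sum_j p_1^j\nu_1^j$, $\Pi(p_0,p_1)$ is the set of nonnegative matrices $\pi$ with row sums $p_0^i$ and column sums $p_1^j$, and $d(\mu_0,\mu_1)=\sqrt{\min_{\pi\in\Pi(p_0,p_1)}\sum_{i,j}W_2(\nu_0^i,\nu_1^j)^2\pi(i,j)}$; $d(\mu_s,\mu_t)$ is defined in the same way using the mixture representations $\mu_s=\sum_{i,j}\pi^*(i,j)\nu_s^{ij}$ and $\mu_t=\sum_{i,j}\pi^*(i,j)\nu_t^{ij}$. *)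

(* Defs.v *)
From HB Require Import structures.
From mathcomp Require Import all_boot all_order all_algebra.
From mathcomp Require Import boolp classical_sets reals.
Set Implicit Arguments. Unset Strict Implicit. Unset Printing Implicit Defensive.
Import Order.TTheory GRing.Theory Num.Theory.
Local Open Scope ring_scope.
Local Open Scope classical_set_scope.

Section Defs.
Variable R : realType.

Definition psdmx n (A : 'M[R]_n) : Prop :=
  A^T = A /\ forall v : 'cV[R]_n, 0 <= (v^T *m A *m v) 0 0.
Definition spdmx n (A : 'M[R]_n) : Prop :=
  A^T = A /\ forall v : 'cV[R]_n, v != 0 -> 0 < (v^T *m A *m v) 0 0.

Definition sqrtm n (A : 'M[R]_n) : 'M[R]_n :=
  xget 0 [set S : 'M[R]_n | psdmx S /\ S *m S = A].

(* a Gaussian N(m, Sigma) on R^n, represented by its parameters (m, Sigma) *)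
Definition gauss n := ('cV[R]_n * 'M[R]_n)%type.

(* squared 2-Wasserstein distance between Gaussians (closed form) *)
Definition W2sq n (g0 g1 : gauss n) : R :=
  let: (m0, S0) := g0 in let: (m1, S1) := g1 in
  \sum_(i < n) ((m0 - m1) i 0) ^+ 2
  + \tr (S0 + S1 - 2%:R *: sqrtm (sqrtm S0 *m S1 *m sqrtm S0)).

Definition disp_interp n (g0 g1 : gauss n) (t : R) : gauss n :=
  let: (m0, S0) := g0 in let: (m1, S1) := g1 in
  let M := (1 - t) *: S0 + t *: sqrtm (sqrtm S0 *m S1 *m sqrtm S0) in
  ((1 - t) *: m0 + t *: m1,
   invmx (sqrtm S0) *m (M *m M) *m invmx (sqrtm S0)).

Definition probvec (I : finType) (p : I -> R) : Prop :=
  (forall i, 0 <= p i) /\ \sum_(i : I) p i = 1.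

Definition couplings (I J : finType) (p0 : I -> R) (p1 : J -> R)
  : set (I -> J -> R) :=
  [set pi | (forall i j, 0 <= pi i j)
         /\ (forall i, \sum_(j : J) pi i j = p0 i)
         /\ (forall j, \sum_(i : I) pi i j = p1 j)].

Definition coupling_cost (I J : finType) (c : I -> J -> R) (pi : I -> J -> R) : R :=
  \sum_(i : I) \sum_(j : J) c i j * pi i j.

(* d between two mixtures given by their representations (weights, components) *)
Definition mixd n (I J : finType) (p0 : I -> R) (g0 : I -> gauss n)
    (p1 : J -> R) (g1 : J -> gauss n) : R :=
  Num.sqrt (inf [set coupling_cost (fun i j => W2sq (g0 i) (g1 j)) pi
                 | pi in couplings p0 p1]).

End Defs.

(* Main.v *)
Require Import Defs.
From HB Require Import structures.
From mathcomp Require Import all_boot all_order all_algebra.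
From mathcomp Require Import boolp classical_sets reals.
From mathcomp Require Import spectral sesquilinear mxred.
From mathcomp.real_closed Require Import complex.
From mathcomp Require Import ring lra.
Import Order.TTheory GRing.Theory Num.Theory.
Local Open Scope ring_scope.
Set Implicit Arguments. Unset Strict Implicit. Unset Printing Implicit Defensive.
Section P1.
Variable R : realType.
Implicit Types n : nat.

Definition qf n (S : 'M[R]_n) (v : 'cV[R]_n) := (v^T *m S *m v) 0 0.

Lemma m11T (M : 'M[R]_1) : M^T 0 0 = M 0 0.
Proof. by rewrite mxE. Qed.

Lemma col_mul m n p (k : 'I_p) (A : 'M[R]_(m, n)) (B : 'M[R]_(n, p)) :
  col k (A *m B) = A *m col k B.
Proof. by rewrite !colE mulmxA. Qed.

Lemma addE00 (X Y : 'M[R]_1) : (X + Y) 0 0 = X 0 0 + Y 0 0.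
Proof. by rewrite mxE. Qed.
Lemma scaleE00 a (X : 'M[R]_1) : (a *: X) 0 0 = a * X 0 0.
Proof. by rewrite mxE. Qed.

Lemma bilin_sym n (S : 'M[R]_n) (u v : 'cV[R]_n) : S^T = S ->
  (u^T *m S *m v) 0 0 = (v^T *m S *m u) 0 0 :> R.
Proof.
by move=> St; rewrite -m11T !trmx_mul trmxK St mulmxA.
Qed.

Lemma sumsq_ge0 n (u : 'cV[R]_n) : 0 <= (u^T *m u) 0 0.
Proof. by rewrite mxE; apply: sumr_ge0 => i _; rewrite mxE -expr2 sqr_ge0. Qed.

Lemma sumsq_eq0 n (u : 'cV[R]_n) : (u^T *m u) 0 0 = 0 -> u = 0.
Proof.
rewrite mxE => /eqP; rewrite psumr_eq0 => [/allP H|i _]; last first.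
  by rewrite mxE -expr2 sqr_ge0.
apply/matrixP => i j; rewrite !mxE (ord1 j).
by have := H i (mem_index_enum _); rewrite mxE -expr2 sqrf_eq0 => /eqP.
Qed.

Lemma qf_expand n (S : 'M[R]_n) (v w : 'cV[R]_n) t : S^T = S ->
  qf S (v + t *: w) = qf S v + 2 * t * (w^T *m S *m v) 0 0 + t ^+ 2 * qf S w.
Proof.
move=> St; rewrite /qf; have -> : (v + t *: w)^T = v^T + t *: w^T by rewrite linearD linearZ.
rewrite /qf !mulmxDl !mulmxDr -!scalemxAl.
rewrite -!scalemxAr.
rewrite !addE00 !scaleE00 (bilin_sym v w St); ring.
Qed.

Lemma psd_ker n (S : 'M[R]_n) (v : 'cV[R]_n) : psdmx S -> qf S v = 0 -> S *m v = 0.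
Proof.
move=> [St Sp] qv.
have key (w : 'cV[R]_n) : (w^T *m S *m v) 0 0 = 0.
  set b := (w^T *m S *m v) 0 0; set c := qf S w.
  have c0 : 0 <= c by apply: Sp.
  set u := b / (c + 1).
  have bu : b = u * (c + 1) by rewrite /u divfK // gt_eqF // ltr_wpDl.
  have := Sp (v + (- u) *: w); rewrite -/(qf _ _) qf_expand // qv -/b -/c bu.
  move=> H.
  have u0 : u = 0.
    apply/eqP; rewrite -sqrf_eq0 eq_le sqr_ge0 andbT.
    nra.
  by rewrite u0 mul0r.
apply: (@sumsq_eq0 n (S *m v)).
have := key (S *m v); rewrite trmx_mul St.
by rewrite -!mulmxA.
Qed.

Lemma tr_cols n (S : 'M[R]_n) (M : 'M[R]_n) :
  \tr (M^T *m S *m M) = \sum_k qf S (col k M).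
Proof.
apply: eq_bigr => k _.
rewrite /qf tr_col.
have -> : (M^T *m S *m M) k k = (row k (col k (M^T *m S *m M))) 0 0.
  by rewrite !mxE.
by rewrite col_mul row_mul row_mul.
Qed.

Lemma psd_tr_ge0 n (S M : 'M[R]_n) : psdmx S -> 0 <= \tr (M^T *m S *m M).
Proof. by move=> [_ Sp]; rewrite tr_cols; apply: sumr_ge0 => k _; apply: Sp. Qed.

Lemma psd_tr_eq0 n (S M : 'M[R]_n) : psdmx S -> \tr (M^T *m S *m M) = 0 ->
  S *m M = 0.
Proof.
move=> [St Sp]; rewrite tr_cols => /eqP; rewrite psumr_eq0 => [/allP H|k _];
  last by apply: Sp.
apply/matrixP => i k; rewrite mxE.
have := H k (mem_index_enum _) => /eqP /(psd_ker (conj St Sp)).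
by rewrite -col_mul => /matrixP /(_ i 0); rewrite !mxE.
Qed.

Lemma psd1 n : psdmx (1%:M : 'M[R]_n).
Proof. by split; [rewrite trmx1 | move=> v; rewrite mulmx1 sumsq_ge0]. Qed.

Definition fro n (M : 'M[R]_n) := \tr (M^T *m M).

Lemma fro_ge0 n (M : 'M[R]_n) : 0 <= fro M.
Proof. by have := psd_tr_ge0 M (@psd1 n); rewrite mulmx1. Qed.

Lemma fro_eq0 n (M : 'M[R]_n) : fro M = 0 -> M = 0.
Proof.
by move=> H; have := psd_tr_eq0 (M := M) (@psd1 n); rewrite mulmx1 mul1mx; apply.
Qed.

Lemma sqrt_unique n (S T : 'M[R]_n) : psdmx S -> psdmx T ->
  S *m S = T *m T -> S = T.
Proof.
move=> Sp Tp E.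
have [St _] := Sp; have [Tt _] := Tp.
set D := S - T.
have Dt : D^T = D by rewrite /D linearB /= St Tt.
have H1 : S *m D + D *m T = 0.
  by rewrite /D mulmxBr mulmxBl E addrC addrA subrK subrr.
have H2 : D *m S *m D = - (D *m D *m T).
  apply/eqP; rewrite -subr_eq0 opprK -!mulmxA -mulmxDr H1 mulmx0 //.
have t1 : 0 <= \tr (D^T *m S *m D) := psd_tr_ge0 _ Sp.
have t2 : 0 <= \tr (D^T *m T *m D) := psd_tr_ge0 _ Tp.
have e : \tr (D^T *m S *m D) = - \tr (D^T *m T *m D).
  rewrite Dt H2 linearN /=; congr (- _).
  by rewrite -mulmxA mxtrace_mulC.
have z1 : \tr (D^T *m S *m D) = 0 by lra.
have z2 : \tr (D^T *m T *m D) = 0 by lra.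
have SD := psd_tr_eq0 Sp z1; have TD := psd_tr_eq0 Tp z2.
have DD : D^T *m D = 0 by rewrite Dt {1}/D mulmxBl SD TD subrr.
apply/eqP; rewrite -subr_eq0 -/D; apply/eqP/fro_eq0.
by rewrite /fro DD linear0.
Qed.

End P1.
Section P2.
Variable R : realType.
Local Notation C := (R[i]).
Local Notation toC := (real_complex R).

Lemma realC (x : R) : toC x \is Num.real.
Proof. by rewrite complex_real. Qed.

Lemma real_diag n (A : 'M[R]_n) : A^T = A ->
  exists Q (d : 'rV[R]_n), Q \in unitmx /\ Q *m A = diag_mx d *m Q.
Proof.
move=> At.
set AC := map_mx toC A.
have Aherm : AC \is hermsymmx.
  apply/is_hermitianmxP; rewrite expr0 scale1r; apply/matrixP => i j.
  rewrite !mxE conj_Creal ?realC //.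
  have := congr1 (fun M : 'M[R]_n => M j i) At; rewrite mxE => ->.
  by [].
have /orthomx_spectralP E := hermitian_normalmx Aherm.
set P := spectralmx AC in E; set sp := spectral_diag AC in E.
have Pu : P \in unitmx by apply: spectral_unit.
have sim : exists2 P0 : 'M_n, P0 \in unitmx & similar P0 AC (diag_mx sp).
  exists P => //; apply/similarP => //.
  by rewrite {1}E !mulmxA mulmxV // mul1mx.
have ACr : AC \is a realmx by apply/mxOverP => i j; rewrite mxE realC.
have spr : sp \is a realmx by apply: hermitian_spectral_diag_real.
have Dr : diag_mx sp \is a realmx.
  apply/mxOverP => i j; rewrite mxE; apply: rpredMn.
  by apply: (mxOverP spr).
have [Q /andP [Qr Qu] /(similarP Qu) QE] := real_similar sim ACr Dr.
exists (map_mx (@complex.Re R) Q), (map_mx (@complex.Re R) sp).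
have QrE : map_mx toC (map_mx (@complex.Re R) Q) = Q.
  by apply/matrixP => i j; rewrite !mxE RRe_real //; apply: (mxOverP Qr).
have sprE : map_mx toC (map_mx (@complex.Re R) sp) = sp.
  by apply/matrixP => i j; rewrite !mxE RRe_real //; apply: (mxOverP spr).
split.
  by rewrite -(map_unitmx toC) QrE.
apply: (@map_mx_inj _ _ toC).
by rewrite !map_mxM QrE map_diag_mx sprE.
Qed.

End P2.
Section P3.
Variable R : realType.

Lemma comm_diag_f n (M : 'M[R]_n) (d : 'rV[R]_n) (f : R -> R) :
  M *m diag_mx d = diag_mx d *m M ->
  M *m diag_mx (map_mx f d) = diag_mx (map_mx f d) *m M.
Proof.
move=> H; apply/matrixP => i j; have := congr1 (fun X : 'M[R]_n => X i j) H.
rewrite !mul_mx_diag !mul_diag_mx !mxE => E.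
case: (eqVneq (d 0 i) (d 0 j)) => [->|ne]; first by rewrite mulrC.
have -> : M i j = 0; last by rewrite mulr0 mul0r.
have : M i j * (d 0 j - d 0 i) = 0 by rewrite mulrBr E mulrC subrr.
by move/eqP; rewrite mulf_eq0 subr_eq0 [d 0 j == _]eq_sym (negPf ne) orbF => /eqP.
Qed.

Lemma conj_mulmx n (Q X Y : 'M[R]_n) : Q \in unitmx ->
  (invmx Q *m X *m Q) *m (invmx Q *m Y *m Q) = invmx Q *m (X *m Y) *m Q.
Proof. by move=> Qu; rewrite !mulmxA mulmxK // !mulmxA. Qed.

Lemma sqrt_exists n (A : 'M[R]_n) : psdmx A -> exists S, psdmx S /\ S *m S = A.
Proof.
move=> [At Ap]; have [Q [d [Qu QA]]] := real_diag At.
set D := diag_mx d in QA.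
have AE : A = invmx Q *m D *m Q by rewrite -mulmxA -QA mulKmx.
have dpos k : 0 <= d 0 k.
  set q := row k Q.
  have qA : q *m A = d 0 k *: q.
    by rewrite /q -row_mul QA row_mul row_diag_mx -scalemxAl -rowE.
  have qq : 0 < (q *m q^T) 0 0.
    have := sumsq_ge0 q^T; rewrite trmxK le_eqVlt => /orP [/eqP H|//].
    exfalso.
    have H' : ((q^T)^T *m q^T) 0 0 = 0 by rewrite trmxK -H.
    have q0 : q = 0 by rewrite -[q]trmxK (sumsq_eq0 H') trmx0.
    have := congr1 (fun M : 'M[R]_n => M k k) (mulmxV Qu).
    have -> : (Q *m invmx Q) k k = (q *m invmx Q) 0 k by rewrite /q -row_mul [RHS]mxE.
    by rewrite q0 mul0mx !mxE eqxx /= => /esym /eqP; rewrite oner_eq0.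
  have := Ap q^T; rewrite trmxK qA -scalemxAl mxE.
  by rewrite pmulr_lge0.
set s := map_mx Num.sqrt d.
set r := map_mx (fun x => Num.sqrt (Num.sqrt x)) d.
have Ds2 : diag_mx s *m diag_mx s = D.
  rewrite mulmx_diag /D; congr diag_mx; apply/rowP => j.
  by rewrite !mxE -expr2 sqr_sqrtr.
have Dr2 : diag_mx r *m diag_mx r = diag_mx s.
  rewrite mulmx_diag; congr diag_mx; apply/rowP => j.
  by rewrite !mxE -expr2 sqr_sqrtr // sqrtr_ge0.
have QTu : Q^T \in unitmx by rewrite unitmx_tr.
set G := Q *m Q^T.
have E1 : Q^T *m (D *m invmx Q^T) = invmx Q *m D *m Q.
  by rewrite -AE -At AE !trmx_mul trmx_inv tr_diag_mx mulmxA.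
have GD : G *m D = D *m G.
  have : Q *m (Q^T *m (D *m invmx Q^T)) *m Q^T = Q *m (invmx Q *m D *m Q) *m Q^T.
    by rewrite E1.
  by rewrite !mulmxA mulmxV // mul1mx mulmxKV // /G mulmxA.
have GDs : G *m diag_mx s = diag_mx s *m G by apply: comm_diag_f.
exists (invmx Q *m diag_mx s *m Q); split; last first.
  by rewrite conj_mulmx // Ds2 -AE.
have St : (invmx Q *m diag_mx s *m Q)^T = invmx Q *m diag_mx s *m Q.
  rewrite !trmx_mul trmx_inv tr_diag_mx.
  have -> : Q^T *m (diag_mx s *m invmx Q^T) = invmx Q *m (G *m diag_mx s) *m invmx Q^T.
    by rewrite /G !mulmxA mulVmx // mul1mx.
  by rewrite GDs /G !mulmxA mulmxK.
split => // v.
set H := invmx Q^T *m invmx Q.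
have HG : H *m G = 1%:M by rewrite /H /G mulmxA -(mulmxA _ _ Q) mulVmx // mulmx1 mulVmx.
have GH : G *m H = 1%:M by rewrite /H /G mulmxA -(mulmxA _ _ (invmx Q^T)) mulmxV // mulmx1 mulmxV.
have HD : H *m D = D *m H.
  by rewrite -[H *m D]mulmx1 -GH mulmxA -(mulmxA H D G) -GD (mulmxA H G D) HG mul1mx.
have HDr : H *m diag_mx r = diag_mx r *m H by apply: comm_diag_f.
have -> : (v^T *m (invmx Q *m diag_mx s *m Q) *m v) =
   (invmx Q *m diag_mx r *m (Q *m v))^T *m (invmx Q *m diag_mx r *m (Q *m v)).
  rewrite !trmx_mul tr_diag_mx trmx_inv.
  transitivity (v^T *m Q^T *m H *m diag_mx s *m (Q *m v)).
    by rewrite /H !mulmxA mulmxK.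
  transitivity (v^T *m Q^T *m (H *m diag_mx r) *m diag_mx r *m (Q *m v)).
    by rewrite -Dr2 /H !mulmxA.
  by rewrite HDr /H !mulmxA.
exact: sumsq_ge0.
Qed.

End P3.
Section P4.
Variable R : realType.
Implicit Types n : nat.

Lemma sqrtmP n (A : 'M[R]_n) : psdmx A -> psdmx (sqrtm A) /\ sqrtm A *m sqrtm A = A.
Proof.
move=> Ap; have [S HS] := sqrt_exists Ap.
exact: (xgetPex 0 (P := [set S : 'M[R]_n | psdmx S /\ S *m S = A]) (ex_intro _ S HS)).
Qed.

Lemma psd_mul_tr n (S : 'M[R]_n) : psdmx (S^T *m S).
Proof.
split; first by rewrite trmx_mul trmxK.
by move=> v; rewrite mulmxA -trmx_mul -mulmxA sumsq_ge0.
Qed.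

Lemma sqrtm_eq n (A S : 'M[R]_n) : psdmx S -> S *m S = A -> sqrtm A = S.
Proof.
move=> Sp SA.
have Ap : psdmx A by rewrite -SA -{1}(proj1 Sp); apply: psd_mul_tr.
have [H1 H2] := sqrtmP Ap.
by apply: sqrt_unique => //; rewrite H2.
Qed.

Lemma spd_psd n (A : 'M[R]_n) : spdmx A -> psdmx A.
Proof.
move=> [At Ap]; split => // v; case: (eqVneq v 0) => [->|/Ap /ltW //].
by rewrite mulmx0 mxE.
Qed.

Lemma psd_ker_unit n (A : 'M[R]_n) : A^T = A -> (forall v : 'cV[R]_n, A *m v = 0 -> v = 0) ->
  A \in unitmx.
Proof.
move=> At H; rewrite unitmxE unitfE; apply/negP => /det0P [v vn0 vA].
have : A *m v^T = 0 by rewrite -At -trmx_mul vA trmx0.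
move/H => vt0; move: vn0; rewrite -[v]trmxK vt0 trmx0 eqxx //.
Qed.

Lemma spd_unit n (A : 'M[R]_n) : spdmx A -> A \in unitmx.
Proof.
move=> [At Ap]; apply: psd_ker_unit => // v Av.
by apply/eqP; apply: contraT => /Ap; rewrite -mulmxA Av mulmx0 mxE ltxx.
Qed.

Lemma psd_unit_spd n (A : 'M[R]_n) : psdmx A -> A \in unitmx -> spdmx A.
Proof.
move=> Ap Au; have [At Ap'] := Ap; split => // v vn0.
rewrite lt_def Ap' andbT; apply/eqP => /(psd_ker Ap) Av.
by move: vn0; rewrite -(mulKmx Au v) Av mulmx0 eqxx.
Qed.

Lemma sqrtm_spd n (A : 'M[R]_n) : spdmx A ->
  [/\ spdmx (sqrtm A), sqrtm A \in unitmx, (sqrtm A)^T = sqrtm A &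
      sqrtm A *m sqrtm A = A].
Proof.
move=> As; have [H1 H2] := sqrtmP (spd_psd As).
have u : sqrtm A \in unitmx.
  by have := spd_unit As; rewrite -{1}H2 unitmx_mul => /andP [].
by split => //; [apply: psd_unit_spd | case: H1].
Qed.

Lemma psd_congr n (S M : 'M[R]_n) : psdmx S -> psdmx (M^T *m S *m M).
Proof.
move=> [St Sp]; split.
  by rewrite !trmx_mul trmxK St mulmxA.
by move=> v; have := Sp (M *m v); rewrite trmx_mul !mulmxA.
Qed.

Lemma spd_congr n (S M : 'M[R]_n) : spdmx S -> M \in unitmx -> spdmx (M^T *m S *m M).
Proof.
move=> Ss Mu; apply: psd_unit_spd; first by apply: psd_congr; apply: spd_psd.
by rewrite !unitmx_mul unitmx_tr Mu (spd_unit Ss).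
Qed.

Lemma psdD n (S T : 'M[R]_n) : psdmx S -> psdmx T -> psdmx (S + T).
Proof.
move=> [St Sp] [Tt Tp]; split; first by rewrite linearD /= St Tt.
by move=> v; rewrite mulmxDr mulmxDl mxE addr_ge0.
Qed.

Lemma psdZ n (a : R) (S : 'M[R]_n) : 0 <= a -> psdmx S -> psdmx (a *: S).
Proof.
move=> a0 [St Sp]; split; first by rewrite linearZ /= St.
by move=> v; rewrite -scalemxAr -scalemxAl mxE mulr_ge0.
Qed.

Lemma spdD n (S T : 'M[R]_n) : spdmx S -> psdmx T -> spdmx (S + T).
Proof.
move=> [St Sp] [Tt Tp]; split; first by rewrite linearD /= St Tt.
move=> v vn0; rewrite mulmxDr mulmxDl mxE; have := Sp v vn0; have := Tp v; lra.
Qed.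

Lemma spdZ n (a : R) (S : 'M[R]_n) : 0 < a -> spdmx S -> spdmx (a *: S).
Proof.
move=> a0 [St Sp]; split; first by rewrite linearZ /= St.
by move=> v vn0; rewrite -scalemxAr -scalemxAl mxE mulr_gt0 // Sp.
Qed.

Lemma spd1 n : spdmx (1%:M : 'M[R]_n).
Proof.
apply: psd_unit_spd; first exact: psd1.
by rewrite unitmx1.
Qed.

End P4.
Section P5.
Variable R : realType.
Implicit Types n : nat.

Lemma W2sq_pair n (m m' : 'cV[R]_n) (X L : 'M[R]_n) : spdmx X -> psdmx L ->
  W2sq (m, X) (m', L *m X *m L) =
  \sum_i ((m - m') i 0)^+2 + \tr ((1%:M - L) *m X *m (1%:M - L)).
Proof.
move=> Xs Lp; rewrite /W2sq.
have [xs xu xt xx] := sqrtm_spd Xs.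
set x := sqrtm X in xs xu xt xx *.
have E : sqrtm (x *m (L *m X *m L) *m x) = x *m L *m x.
  apply: sqrtm_eq; first by have := psd_congr x Lp; rewrite xt.
  by rewrite -xx !mulmxA.
rewrite E; congr (_ + _).
have [Lt _] := Lp.
rewrite !mulmxBl !mulmxBr !mul1mx !mulmx1.
rewrite !raddfD /= !raddfN /= opprK mxtraceZ.
have e1 : \tr (x *m L *m x) = \tr (X *m L) by rewrite mxtrace_mulC mulmxA xx.
have e2 : \tr (X *m L) = \tr (L *m X) by rewrite mxtrace_mulC.
rewrite e1 e2; lra.
Qed.

Definition Tmap n (A B : 'M[R]_n) :=
  invmx (sqrtm A) *m sqrtm (sqrtm A *m B *m sqrtm A) *m invmx (sqrtm A).
Definition Lm n (A B : 'M[R]_n) (s : R) := (1 - s) *: 1%:M + s *: Tmap A B.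

Section Geo.
Variables (n : nat) (A B : 'M[R]_n).
Hypotheses (As : spdmx A) (Bs : spdmx B).

Let a := sqrtm A.
Let C := sqrtm (a *m B *m a).

Lemma a_props : [/\ spdmx a, a \in unitmx, a^T = a & a *m a = A].
Proof. exact: sqrtm_spd. Qed.

Lemma aBa_spd : spdmx (a *m B *m a).
Proof.
have [_ au aT _] := a_props.
by have := spd_congr Bs au; rewrite aT.
Qed.

Lemma C_props : [/\ spdmx C, C \in unitmx, C^T = C & C *m C = a *m B *m a].
Proof. exact: sqrtm_spd aBa_spd. Qed.

Lemma T_spd : spdmx (Tmap A B).
Proof.
have [_ au aT _] := a_props; have [Cs _ _ _] := C_props.
have := @spd_congr R n C (invmx a) Cs; rewrite unitmx_inv => /(_ au); rewrite trmx_inv aT.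
by rewrite /Tmap -/a -/C.
Qed.

Lemma TAT : Tmap A B *m A *m Tmap A B = B.
Proof.
have [_ au aT aa] := a_props; have [_ _ _ CC] := C_props.
rewrite /Tmap -/a -/C -aa.
rewrite !mulmxA mulmxKV // -(mulmxA _ a) mulmxV // mulmx1.
by rewrite -(mulmxA _ C C) CC !mulmxA mulVmx // mul1mx mulmxK.
Qed.

Lemma Lm_sym s : (Lm A B s)^T = Lm A B s.
Proof. by have [Tt _] := T_spd; rewrite /Lm linearD !linearZ /= trmx1 Tt. Qed.

Lemma Lm_spd s : 0 <= s <= 1 -> spdmx (Lm A B s).
Proof.
case/andP => s0 s1; rewrite /Lm.
case: (eqVneq s 0) => [->|sn0].
  by rewrite subr0 scale1r scale0r addr0; apply: spd1.
rewrite addrC; apply: spdD; first by apply: spdZ; [rewrite lt_def sn0 s0 | exact: T_spd].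
by apply: psdZ; [rewrite subr_ge0 | exact: psd1].
Qed.

Lemma Lm_mul s t : Lm A B s *m Lm A B t = ((1 - s) * (1 - t)) *: 1%:M +
  ((1 - s) * t + s * (1 - t)) *: Tmap A B + (s * t) *: (Tmap A B *m Tmap A B).
Proof.
rewrite /Lm !mulmxDl !mulmxDr -!scalemxAl -!scalemxAr !mul1mx !mulmx1.
set T := Tmap A B; set TT := T *m T.
by apply/matrixP => i j; rewrite !mxE; ring.
Qed.

Lemma Lm_comm s t : Lm A B s *m Lm A B t = Lm A B t *m Lm A B s.
Proof.
rewrite !Lm_mul; congr (_ *: _ + _ *: _ + _ *: _); ring.
Qed.

Lemma disp_cov (m0 m1 : 'cV[R]_n) s :
  (disp_interp (m0, A) (m1, B) s).2 = Lm A B s *m A *m Lm A B s.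
Proof.
have [_ au aT aa] := a_props.
rewrite /= -/a -/C.
set M := (1 - s) *: A + s *: C.
have h1 : Lm A B s *m a = invmx a *m M.
  rewrite /Lm /Tmap -/a -/C /M mulmxDl mulmxDr -!scalemxAl -!scalemxAr mul1mx.
  by rewrite mulmxKV // -aa mulmxA mulVmx // mul1mx.
have h2 : a *m Lm A B s = M *m invmx a.
  rewrite /Lm /Tmap -/a -/C /M mulmxDl mulmxDr -!scalemxAl -!scalemxAr mulmx1.
  by rewrite !mulmxA mulmxV // mul1mx -aa mulmxK.
have -> : Lm A B s *m A *m Lm A B s = (Lm A B s *m a) *m (a *m Lm A B s).
  by rewrite !mulmxA -(mulmxA _ a a) aa.
by rewrite h1 h2 !mulmxA.
Qed.

Lemma disp_eq (m0 m1 : 'cV[R]_n) u : disp_interp (m0, A) (m1, B) u =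
  ((1 - u) *: m0 + u *: m1, Lm A B u *m A *m Lm A B u).
Proof. by rewrite -(disp_cov m0 m1 u). Qed.

Lemma W2sq_base (m0 m1 : 'cV[R]_n) : W2sq (m0, A) (m1, B) =
  \sum_i ((m0 - m1) i 0)^+2 +
  \tr ((1%:M - Tmap A B) *m A *m (1%:M - Tmap A B)).
Proof.
by rewrite -{1}TAT W2sq_pair //; apply: spd_psd; apply: T_spd.
Qed.

Lemma Lm_diff s t : Lm A B s - Lm A B t = (t - s) *: (1%:M - Tmap A B).
Proof. by apply/matrixP => i j; rewrite !mxE; ring. Qed.

Lemma geo (m0 m1 : 'cV[R]_n) s t : 0 <= s <= 1 -> 0 <= t <= 1 ->
  W2sq (disp_interp (m0, A) (m1, B) s) (disp_interp (m0, A) (m1, B) t) =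
  (t - s) ^+ 2 * W2sq (m0, A) (m1, B).
Proof.
move=> hs ht.
have Lss := Lm_spd hs; have Lts := Lm_spd ht.
have Lsu := spd_unit Lss.
rewrite !disp_eq W2sq_base.
set Ls := Lm A B s; set Lt := Lm A B t; set T := Tmap A B.
have Xs : spdmx (Ls *m A *m Ls).
  by have := spd_congr As Lsu; rewrite Lm_sym.
set K := Lt *m invmx Ls.
have KXK : Lt *m A *m Lt = K *m (Ls *m A *m Ls) *m K.
  rewrite /K !mulmxA mulmxKV // -(mulmxA (Lt *m A) Ls Lt).
  by rewrite [Ls *m Lt]Lm_comm -/Ls -/Lt mulmxA mulmxK.
have Kp : psdmx K.
  have -> : K = (invmx Ls)^T *m (Ls *m Lt) *m invmx Ls.
    by rewrite trmx_inv Lm_sym -/Ls !mulmxA mulVmx // mul1mx.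
  apply: psd_congr; rewrite /Ls /Lt Lm_mul -/T.
  have [s0 s1] := andP hs; have [t0 t1] := andP ht.
  have Tp : psdmx T by apply: spd_psd; apply: T_spd.
  have TTp : psdmx (T *m T).
    by have := psd_mul_tr T; have [Tt _] := Tp; rewrite Tt.
  apply: psdD; first apply: psdD.
  - by apply: psdZ; [nra | exact: psd1].
  - by apply: psdZ => //; nra.
  - by apply: psdZ => //; nra.
rewrite KXK W2sq_pair //.
have e1 : (1%:M - K) *m Ls = Ls - Lt.
  by rewrite mulmxBl mul1mx /K mulmxKV.
have e2 : Ls *m (1%:M - K) = Ls - Lt.
  by rewrite mulmxBr mulmx1 /K mulmxA [Ls *m Lt]Lm_comm -/Ls -/Lt mulmxK.
have -> : (1%:M - K) *m (Ls *m A *m Ls) *m (1%:M - K) =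
    (t - s) ^+ 2 *: ((1%:M - T) *m A *m (1%:M - T)).
  rewrite !mulmxA e1 -mulmxA e2 /Ls /Lt Lm_diff -/T.
  by rewrite -scalemxAl -scalemxAr -scalemxAl scalerA expr2.
rewrite mxtraceZ mulrDr; congr (_ + _).
rewrite mulr_sumr; apply: eq_bigr => i _; rewrite !mxE; ring.
Qed.

Lemma disp0 (m0 m1 : 'cV[R]_n) : disp_interp (m0, A) (m1, B) 0 = (m0, A).
Proof.
by rewrite disp_eq /Lm subr0 !scale1r !scale0r !addr0 mulmx1 mul1mx.
Qed.

Lemma disp1 (m0 m1 : 'cV[R]_n) : disp_interp (m0, A) (m1, B) 1 = (m1, B).
Proof.
by rewrite disp_eq /Lm subrr !scale0r !scale1r !add0r TAT.
Qed.

Lemma disp_spd (m0 m1 : 'cV[R]_n) s : 0 <= s <= 1 ->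
  spdmx (disp_interp (m0, A) (m1, B) s).2.
Proof.
move=> hs; rewrite disp_eq /=.
by have := spd_congr As (spd_unit (Lm_spd hs)); rewrite Lm_sym.
Qed.

End Geo.
End P5.
Section P6.
Variable R : realType.

Lemma cauchy_schwarz (I : finType) (w f g : I -> R) : (forall i, 0 <= w i) ->
  (\sum_i w i * f i * g i) ^+ 2 <=
  (\sum_i w i * f i ^+ 2) * (\sum_i w i * g i ^+ 2).
Proof.
move=> w0.
set A := \sum_i w i * f i ^+ 2; set B := \sum_i w i * g i ^+ 2.
set Cc := \sum_i w i * f i * g i.
have E : \sum_i \sum_j w i * w j * (f i * g j - f j * g i) ^+ 2 =
    2 * (A * B - Cc ^+ 2).
  have S1 : \sum_i \sum_j (w i * f i ^+ 2) * (w j * g j ^+ 2) = A * B.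
    by rewrite big_distrlr.
  have S2 : \sum_i \sum_j (w j * f j ^+ 2) * (w i * g i ^+ 2) = A * B.
    by rewrite exchange_big /= big_distrlr.
  have S3 : \sum_i \sum_j (w i * f i * g i) * (w j * f j * g j) = Cc ^+ 2.
    by rewrite expr2 big_distrlr.
  rewrite (_ : \sum_i \sum_j w i * w j * (f i * g j - f j * g i) ^+ 2 =
    \sum_i \sum_j (w i * f i ^+ 2) * (w j * g j ^+ 2) +
    \sum_i \sum_j (w j * f j ^+ 2) * (w i * g i ^+ 2) -
    2 * \sum_i \sum_j (w i * f i * g i) * (w j * f j * g j)).
    by rewrite S1 S2 S3; clear; ring.
  rewrite mulr_sumr -big_split -sumrB /=; apply: eq_bigr => i _.
  rewrite mulr_sumr -big_split -sumrB /=; apply: eq_bigr => j _; ring.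
have : 0 <= \sum_i \sum_j w i * w j * (f i * g j - f j * g i) ^+ 2.
  by apply: sumr_ge0 => i _; apply: sumr_ge0 => j _; rewrite mulr_ge0 ?sqr_ge0 ?mulr_ge0.
rewrite E; nra.
Qed.

Lemma minkowski (I : finType) (w f g : I -> R) : (forall i, 0 <= w i) ->
  Num.sqrt (\sum_i w i * (f i + g i) ^+ 2) <=
  Num.sqrt (\sum_i w i * f i ^+ 2) + Num.sqrt (\sum_i w i * g i ^+ 2).
Proof.
move=> w0.
have CS := cauchy_schwarz f g w0.
set A := \sum_i w i * f i ^+ 2 in CS *; set B := \sum_i w i * g i ^+ 2 in CS *.
set Cc := \sum_i w i * f i * g i in CS.
have A0 : 0 <= A by apply: sumr_ge0 => i _; rewrite mulr_ge0 ?sqr_ge0.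
have B0 : 0 <= B by apply: sumr_ge0 => i _; rewrite mulr_ge0 ?sqr_ge0.
have -> : \sum_i w i * (f i + g i) ^+ 2 = A + B + 2 * Cc.
  rewrite /A /B /Cc mulr_sumr -!big_split /=; apply: eq_bigr => i _; ring.
have sA := sqrtr_ge0 A; have sB := sqrtr_ge0 B.
rewrite -[X in _ <= X]ger0_norm ?addr_ge0 // -sqrtr_sqr ler_sqrt ?sqr_ge0 //.
have hA := sqr_sqrtr A0; have hB := sqr_sqrtr B0.
have : Cc <= Num.sqrt A * Num.sqrt B.
  case: (lerP Cc 0) => [c0|c0]; first by apply: le_trans c0 _; rewrite mulr_ge0.
  rewrite -sqrtrM // -(ger0_norm (ltW c0)) -sqrtr_sqr ler_sqrt ?mulr_ge0 //.
nra.
Qed.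

End P6.
Section P7.
Variable R : realType.
Implicit Types n : nat.

Lemma tr_orth_le n (P W : 'M[R]_n) : psdmx P -> W^T *m W = 1%:M ->
  \tr (P *m W) <= \tr P.
Proof.
move=> Pp WW.
have [[qt qp] qq] := sqrtmP Pp; set q := sqrtm P in qt qp qq *.
have := fro_ge0 (q - W *m q).
rewrite /fro.
have -> : (q - W *m q)^T = q^T - (W *m q)^T by rewrite linearB.
rewrite trmx_mul qt mulmxBl !mulmxBr.
rewrite !raddfB /=.
have e1 : \tr (q *m (W *m q)) = \tr (P *m W).
  by rewrite mxtrace_mulC -mulmxA qq mxtrace_mulC.
have e2 : \tr (q *m W^T *m q) = \tr (P *m W).
  by rewrite -mxtrace_tr !trmx_mul trmxK qt mulmxA -e1 mulmxA.
have e3 : \tr (q *m W^T *m (W *m q)) = \tr P.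
  by rewrite -mulmxA (mulmxA W^T) WW mul1mx qq.
rewrite e1 e2 e3 -qq; lra.
Qed.

Lemma polar n (Z : 'M[R]_n) : Z \in unitmx ->
  (forall U, U^T *m U = 1%:M -> \tr (Z^T *m U) <= \tr (sqrtm (Z^T *m Z))) /\
  exists U, U^T *m U = 1%:M /\ \tr (Z^T *m U) = \tr (sqrtm (Z^T *m Z)).
Proof.
move=> Zu.
have ZZs : spdmx (Z^T *m Z) by have := spd_congr (@spd1 R n) Zu; rewrite mulmx1.
have [Ps Pu Pt PP] := sqrtm_spd ZZs; set P := sqrtm (Z^T *m Z) in Ps Pu Pt PP *.
set U0 := Z *m invmx P.
have U0o : U0^T *m U0 = 1%:M.
  rewrite /U0 trmx_mul trmx_inv Pt !mulmxA -(mulmxA (invmx P) Z^T Z) -PP.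
  by rewrite mulmxA mulVmx // mul1mx mulmxV.
have ZE : Z = U0 *m P by rewrite /U0 mulmxKV.
have U0t : \tr (Z^T *m U0) = \tr P by rewrite /U0 mulmxA -PP mulmxK.
clearbody U0.
split; last by exists U0.
move=> U Uo.
rewrite {1}ZE trmx_mul Pt -mulmxA; apply: tr_orth_le; first exact: spd_psd.
have U0o' : U0 *m U0^T = 1%:M by apply: mulmx1C.
by rewrite trmx_mul trmxK mulmxA -(mulmxA U^T U0 U0^T) U0o' mulmx1.
Qed.

Lemma fro_expand n (x y U : 'M[R]_n) : x^T = x -> y^T = y -> U^T *m U = 1%:M ->
  fro (x - y *m U) = \tr (x *m x) + \tr (y *m y) - 2 * \tr (x *m y *m U).
Proof.
move=> xt yt Uo.
rewrite /fro.
have -> : (x - y *m U)^T = x^T - (y *m U)^T by rewrite linearB.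
rewrite trmx_mul xt yt mulmxBl !mulmxBr !raddfB /=.
have e1 : \tr (U^T *m y *m x) = \tr (x *m y *m U).
  by rewrite -mxtrace_tr !trmx_mul trmxK xt yt mulmxA.
have U1 : U *m U^T = 1%:M by apply: mulmx1C.
have e2 : \tr (U^T *m y *m (y *m U)) = \tr (y *m y).
  by rewrite mxtrace_mulC -!mulmxA (mulmxA U) U1 mul1mx.
rewrite e1 e2 mulmxA; lra.
Qed.

Definition msq n (m m' : 'cV[R]_n) := \sum_i ((m - m') i 0) ^+ 2.

Lemma W2_fro n (m m' : 'cV[R]_n) (X Y : 'M[R]_n) : spdmx X -> spdmx Y ->
  (forall U, U^T *m U = 1%:M ->
     W2sq (m, X) (m', Y) <= msq m m' + fro (sqrtm X - sqrtm Y *m U)) /\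
  exists U, U^T *m U = 1%:M /\
     W2sq (m, X) (m', Y) = msq m m' + fro (sqrtm X - sqrtm Y *m U).
Proof.
move=> Xs Ys.
have [_ xu xt xx] := sqrtm_spd Xs; have [_ yu yt yy] := sqrtm_spd Ys.
set x := sqrtm X in xu xt xx *; set y := sqrtm Y in yu yt yy *.
have Zu : y *m x \in unitmx by rewrite unitmx_mul yu xu.
have ZZ : (y *m x)^T *m (y *m x) = x *m Y *m x.
  by rewrite trmx_mul xt yt !mulmxA -(mulmxA x y y) yy.
have ZT : (y *m x)^T = x *m y by rewrite trmx_mul xt yt.
have [P1 [U0 [U0o P2]]] := polar Zu.
rewrite ZZ ZT in P1 P2.
have W2E : W2sq (m, X) (m', Y) =
    msq m m' + (\tr X + \tr Y - 2 * \tr (sqrtm (x *m Y *m x))).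
  by rewrite /W2sq /msq -/x !raddfD /= raddfN /= mxtraceZ.
split.
  move=> U Uo; rewrite W2E fro_expand // xx yy.
  have := P1 U Uo; lra.
exists U0; split => //.
by rewrite W2E fro_expand // xx yy P2.
Qed.

End P7.
Section P8.
Variable R : realType.
Implicit Types n : nat.

Lemma fro_sum n (M : 'M[R]_n) : fro M = \sum_(p : 'I_n * 'I_n) (M p.1 p.2) ^+ 2.
Proof.
rewrite /fro /mxtrace -(pair_big predT predT (fun i j => M i j ^+ 2)) /=.
rewrite exchange_big /=; apply: eq_bigr => k _; rewrite mxE.
by apply: eq_bigr => i _; rewrite mxE expr2.
Qed.

Definition vm n (v : 'cV[R]_n) (M : 'M[R]_n) (x : ('I_n + ('I_n * 'I_n))%type) : R :=
  match x with inl i => v i 0 | inr p => M p.1 p.2 end.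

Lemma vm_sum n (v : 'cV[R]_n) (M : 'M[R]_n) :
  \sum_i (v i 0) ^+ 2 + fro M = \sum_x 1 * (vm v M x) ^+ 2.
Proof.
rewrite fro_sum big_sumType /=.
by congr (_ + _); apply: eq_bigr => i _; rewrite mul1r.
Qed.

Lemma N_mink n (v1 v2 : 'cV[R]_n) (M1 M2 : 'M[R]_n) :
  Num.sqrt (\sum_i ((v1 + v2) i 0) ^+ 2 + fro (M1 + M2)) <=
  Num.sqrt (\sum_i (v1 i 0) ^+ 2 + fro M1) + Num.sqrt (\sum_i (v2 i 0) ^+ 2 + fro M2).
Proof.
rewrite !vm_sum.
have -> : \sum_x 1 * vm (v1 + v2) (M1 + M2) x ^+ 2 =
    \sum_x 1 * (vm v1 M1 x + vm v2 M2 x) ^+ 2.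
  by apply: eq_bigr => -[i|p] _ /=; rewrite !mxE.
by apply: minkowski => i; apply: ler01.
Qed.

Lemma fro_orth n (M U : 'M[R]_n) : U^T *m U = 1%:M -> fro (M *m U) = fro M.
Proof.
move=> Uo; have U1 : U *m U^T = 1%:M by apply: mulmx1C.
rewrite /fro trmx_mul mxtrace_mulC -!mulmxA (mulmxA U) U1 mul1mx.
by rewrite mxtrace_mulC.
Qed.

Lemma W2_tri n (a b c : gauss R n) : spdmx a.2 -> spdmx b.2 -> spdmx c.2 ->
  Num.sqrt (W2sq a c) <= Num.sqrt (W2sq a b) + Num.sqrt (W2sq b c).
Proof.
case: a => ma X; case: b => mb Y; case: c => mc Z => Xs Ys Zs.
have [_ [U1 [U1o E1]]] := W2_fro ma mb Xs Ys.
have [_ [U2 [U2o E2]]] := W2_fro mb mc Ys Zs.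
have [B3 _] := W2_fro ma mc Xs Zs.
have U3o : (U2 *m U1)^T *m (U2 *m U1) = 1%:M.
  by rewrite trmx_mul -mulmxA (mulmxA U2^T) U2o mul1mx.
apply: le_trans (_ : Num.sqrt (msq ma mc + fro (sqrtm X - sqrtm Z *m (U2 *m U1))) <= _).
  by rewrite ler_sqrt ?B3 // addr_ge0 ?fro_ge0 // /msq sumr_ge0 // => i _; apply: sqr_ge0.
rewrite E1 E2 -(fro_orth (sqrtm Y - sqrtm Z *m U2) U1o) /msq.
have -> : ma - mc = (ma - mb) + (mb - mc) by rewrite addrA subrK.
have -> : sqrtm X - sqrtm Z *m (U2 *m U1) =
    (sqrtm X - sqrtm Y *m U1) + (sqrtm Y - sqrtm Z *m U2) *m U1.
  by rewrite mulmxBl addrA subrK mulmxA.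
exact: N_mink.
Qed.

End P8.
Section P9.
Variable R : realType.

Lemma minkowski2 (I J : finType) (w f g : I -> J -> R) : (forall i j, 0 <= w i j) ->
  Num.sqrt (\sum_i \sum_j w i j * (f i j + g i j) ^+ 2) <=
  Num.sqrt (\sum_i \sum_j w i j * f i j ^+ 2) + Num.sqrt (\sum_i \sum_j w i j * g i j ^+ 2).
Proof.
move=> w0.
rewrite !(pair_big predT predT (fun i j => w i j * _)) /=.
exact: (minkowski (fun p => f p.1 p.2) (fun p => g p.1 p.2) (fun p => w0 p.1 p.2)).
Qed.

Lemma inf_min (E : set R) e : E e -> (forall y, E y -> e <= y) -> inf E = e.
Proof.
move=> Ee lb; apply/eqP; rewrite eq_le; apply/andP; split.
  by apply: (ge_inf (ex_intro _ e lb)).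
by apply: lb_le_inf => //; exists e.
Qed.

Section G.
Variable n : nat.
Implicit Types g : gauss R n.

Lemma geo_g g0 g1 s t : spdmx g0.2 -> spdmx g1.2 -> 0 <= s <= 1 -> 0 <= t <= 1 ->
  W2sq (disp_interp g0 g1 s) (disp_interp g0 g1 t) = (t - s) ^+ 2 * W2sq g0 g1.
Proof. by case: g0 => m0 A; case: g1 => m1 B => As Bs; apply: (geo As Bs). Qed.

Lemma disp0_g g0 g1 : spdmx g0.2 -> spdmx g1.2 -> disp_interp g0 g1 0 = g0.
Proof. by case: g0 => m0 A; case: g1 => m1 B => As Bs; apply: (@disp0 _ _ A B As). Qed.

Lemma disp1_g g0 g1 : spdmx g0.2 -> spdmx g1.2 -> disp_interp g0 g1 1 = g1.
Proof. by case: g0 => m0 A; case: g1 => m1 B => As Bs; apply: (disp1 As Bs). Qed.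

Lemma disp_spd_g g0 g1 s : spdmx g0.2 -> spdmx g1.2 -> 0 <= s <= 1 ->
  spdmx (disp_interp g0 g1 s).2.
Proof. by case: g0 => m0 A; case: g1 => m1 B => As Bs; apply: (@disp_spd _ _ A B As). Qed.

Lemma W2_ge0 g0 g1 : spdmx g0.2 -> spdmx g1.2 -> 0 <= W2sq g0 g1.
Proof.
case: g0 => m0 A; case: g1 => m1 B => As Bs.
have [_ [U [_ ->]]] := W2_fro m0 m1 As Bs.
by rewrite addr_ge0 ?fro_ge0 // /msq sumr_ge0 // => i _; apply: sqr_ge0.
Qed.

End G.
End P9.
Lemma sum_pair (R : realType) (I J : finType) (F : I * J -> R) :
  \sum_i \sum_j F (i, j) = \sum_p F p.
Proof. by rewrite pair_big /=; apply: eq_bigr => -[i j] _. Qed.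

Unset Implicit Arguments.

Theorem theorem2 (R : realType) (n N0 N1 : nat)
  (p0 : 'I_N0 -> R) (g0 : 'I_N0 -> gauss R n)
  (p1 : 'I_N1 -> R) (g1 : 'I_N1 -> gauss R n)
  (pistar : 'I_N0 -> 'I_N1 -> R) :
  probvec p0 -> probvec p1 ->
  (forall i, spdmx (g0 i).2) -> (forall j, spdmx (g1 j).2) ->
  couplings p0 p1 pistar ->
  (forall pi, couplings p0 p1 pi ->
     coupling_cost (fun i j => W2sq (g0 i) (g1 j)) pistar
     <= coupling_cost (fun i j => W2sq (g0 i) (g1 j)) pi) ->
  forall s t : R, 0 <= s -> s < t -> t <= 1 ->
  mixd (fun ij : 'I_N0 * 'I_N1 => pistar ij.1 ij.2)
       (fun ij : 'I_N0 * 'I_N1 => disp_interp (g0 ij.1) (g1 ij.2) s)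
       (fun ij : 'I_N0 * 'I_N1 => pistar ij.1 ij.2)
       (fun ij : 'I_N0 * 'I_N1 => disp_interp (g0 ij.1) (g1 ij.2) t)
  = (t - s) * mixd p0 g0 p1 g1.
Proof.
move=> _ _ g0s g1s cp opt s t s0 st t1.
have hs : 0 <= s <= 1 by apply/andP; split; lra.
have ht : 0 <= t <= 1 by apply/andP; split; lra.
have h0 : 0 <= (0 : R) <= 1 by rewrite lexx ler01.
have h1 : 0 <= (1 : R) <= 1 by rewrite lexx ler01.
set W := fun i j => W2sq (g0 i) (g1 j).
have W0 i j : 0 <= W i j := W2_ge0 (g0s i) (g1s j).
set D2 := coupling_cost W pistar.
have [pi0 [rows cols]] := cp.
have D20 : 0 <= D2.
  by apply: sumr_ge0 => i _; apply: sumr_ge0 => j _; apply: mulr_ge0.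
have -> : mixd p0 g0 p1 g1 = Num.sqrt D2.
  rewrite /mixd; congr Num.sqrt; apply: inf_min; first by exists pistar.
  by move=> y [pi cpi <-]; apply: opt.
set q := fun ij : 'I_N0 * 'I_N1 => pistar ij.1 ij.2.
set nus := fun ij : 'I_N0 * 'I_N1 => disp_interp (g0 ij.1) (g1 ij.2) s.
set nut := fun ij : 'I_N0 * 'I_N1 => disp_interp (g0 ij.1) (g1 ij.2) t.
set c := fun ij kl => W2sq (nus ij) (nut kl).
have nus_s ij : spdmx (nus ij).2 by apply: disp_spd_g.
have nut_s ij : spdmx (nut ij).2 by apply: disp_spd_g.
have c0 ij kl : 0 <= c ij kl by apply: W2_ge0.
have qD2 : \sum_ij W ij.1 ij.2 * q ij = D2.
  by rewrite -sum_pair.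
have -> : mixd q nus q nut = Num.sqrt ((t - s) ^+ 2 * D2).
  rewrite /mixd; congr Num.sqrt; apply: inf_min.
    set gd := fun ij kl : 'I_N0 * 'I_N1 => if ij == kl then q ij else 0.
    have gsum1 ij : \sum_kl gd ij kl = q ij.
      rewrite (bigD1 ij) //= /gd eqxx big1 ?addr0 // => kl.
      by rewrite eq_sym => /negPf ->.
    have gsum2 kl : \sum_ij gd ij kl = q kl.
      rewrite (bigD1 kl) //= /gd eqxx big1 ?addr0 // => ij.
      by move=> /negPf ->.
    exists gd.
      split; first by move=> ij kl; rewrite /gd; case: (_ == _) => //; apply: pi0.
      by split; [apply: gsum1 | apply: gsum2].
    rewrite -qD2 /coupling_cost mulr_sumr; apply: eq_bigr => ij _.
    rewrite (bigD1 ij) //= /gd eqxx big1 ?addr0; last first.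
      by move=> kl; rewrite eq_sym => /negPf ->; rewrite mulr0.
    by rewrite /c /nus /nut geo_g // mulrA.
  move=> y [gm [gm0 [grow gcol]] <-].
  set E := coupling_cost c gm.
  set pg := fun i l => \sum_j \sum_k gm (i, j) (k, l).
  have pgc : couplings p0 p1 pg.
    split; first by move=> i l; apply: sumr_ge0 => j _; apply: sumr_ge0 => k _.
    split.
      move=> i; rewrite /pg exchange_big /= -rows; apply: eq_bigr => j _.
      by rewrite exchange_big /= sum_pair grow.
    move=> l; rewrite /pg (sum_pair (fun ij => \sum_k gm ij (k, l))) exchange_big /=.
    by rewrite -cols; apply: eq_bigr => k _; rewrite gcol.
  have DS := opt pg pgc; rewrite -/W -/D2 in DS.
  set S := \sum_ij \sum_kl gm ij kl * W ij.1 kl.2.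
  have CS : coupling_cost W pg = S.
    rewrite /coupling_cost /S -sum_pair /=; apply: eq_bigr => i _.
    under [RHS]eq_bigr => j _ do rewrite -(sum_pair (fun kl => gm (i, j) kl * W i kl.2)) /=.
    under eq_bigr => l _ do rewrite /pg mulr_sumr.
    rewrite exchange_big /=; apply: eq_bigr => j _.
    under eq_bigr => l _ do rewrite mulr_sumr.
    rewrite exchange_big /=; apply: eq_bigr => k _; apply: eq_bigr => l _.
    by rewrite mulrC.
  have sq2 (u v : R) : 0 <= u -> 0 <= v -> Num.sqrt (u ^+ 2 * v) = u * Num.sqrt v.
    by move=> u0 v0; rewrite sqrtrM ?sqr_ge0 // sqrtr_sqr ger0_norm.
  set a := fun ij : 'I_N0 * 'I_N1 => Num.sqrt (W ij.1 ij.2).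
  set e := fun ij kl => Num.sqrt (c ij kl).
  set F := fun ij kl : 'I_N0 * 'I_N1 => s * a ij.
  set H := fun ij kl : 'I_N0 * 'I_N1 => (1 - t) * a kl.
  have tri ij kl : Num.sqrt (W ij.1 kl.2) <= F ij kl + e ij kl + H ij kl.
    have T1 := W2_tri (g0s ij.1) (nus_s ij) (g1s kl.2).
    have T2 := W2_tri (nus_s ij) (nut_s kl) (g1s kl.2).
    have E1 : W2sq (g0 ij.1) (nus ij) = s ^+ 2 * W ij.1 ij.2.
      by have := geo_g (g0s ij.1) (g1s ij.2) h0 hs; rewrite disp0_g // subr0.
    have E2 : W2sq (nut kl) (g1 kl.2) = (1 - t) ^+ 2 * W kl.1 kl.2.
      by have := geo_g (g0s kl.1) (g1s kl.2) ht h1; rewrite disp1_g.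
    rewrite E1 in T1; rewrite E2 in T2.
    rewrite sq2 // in T1; rewrite sq2 ?subr_ge0 // in T2.
    rewrite /F /H /e /a /c; lra.
  have St : S <= \sum_ij \sum_kl gm ij kl * (F ij kl + e ij kl + H ij kl) ^+ 2.
    apply: ler_sum => ij _; apply: ler_sum => kl _; apply: ler_wpM2l => //.
    have := tri ij kl; have := sqr_sqrtr (W0 ij.1 kl.2); have := sqrtr_ge0 (W ij.1 kl.2).
    nra.
  have M1 := minkowski2 (fun ij kl => F ij kl + e ij kl) H gm0.
  have M2 := minkowski2 F e gm0.
  have SF : \sum_ij \sum_kl gm ij kl * F ij kl ^+ 2 = s ^+ 2 * D2.
    rewrite -qD2 mulr_sumr; apply: eq_bigr => ij _.
    rewrite /F /a -mulr_suml grow exprMn sqr_sqrtr //; ring.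
  have SH : \sum_ij \sum_kl gm ij kl * H ij kl ^+ 2 = (1 - t) ^+ 2 * D2.
    rewrite exchange_big /= -qD2 mulr_sumr; apply: eq_bigr => kl _.
    rewrite /H /a -mulr_suml gcol exprMn sqr_sqrtr //; ring.
  have SE : \sum_ij \sum_kl gm ij kl * e ij kl ^+ 2 = E.
    apply: eq_bigr => ij _; apply: eq_bigr => kl _.
    by rewrite /e sqr_sqrtr // mulrC.
  rewrite SF SE in M2; rewrite SH in M1.
  rewrite sq2 // in M2; rewrite sq2 ?subr_ge0 // in M1.
  have S0 : 0 <= S by rewrite -CS; apply: le_trans DS.
  have L1 : Num.sqrt D2 <= Num.sqrt S by rewrite ler_sqrt // -CS.
  have L2 : Num.sqrt S <= Num.sqrt (\sum_ij \sum_kl gm ij kl * (F ij kl + e ij kl + H ij kl) ^+ 2).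
    by rewrite ler_sqrt //; apply: le_trans St.
  have E0 : 0 <= E by apply: sumr_ge0 => ij _; apply: sumr_ge0 => kl _; apply: mulr_ge0.
  have x0 := sqrtr_ge0 D2; have y0 := sqrtr_ge0 E.
  have x2 := sqr_sqrtr D20; have y2 := sqr_sqrtr E0.
  have key : (t - s) * Num.sqrt D2 <= Num.sqrt E by lra.
  have ts : 0 <= t - s by lra.
  have := ler_pM (mulr_ge0 ts x0) (mulr_ge0 ts x0) key key.
  by rewrite mulrACA -!expr2 x2 y2.
by rewrite (sqrtrM D2 (sqr_ge0 (t - s))) sqrtr_sqr ger0_norm // subr_ge0 ltW.
Qed.
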